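(* Let $f \colon \mathbb{R} \to \mathbb{R}$ be given by $f(x) = \ln\big(\frac{\sinh x}{x}\big) - \frac{x^2}{6}$ for $x \neq 0$ and $f(0) = 0$. Then $f$ is continuous on $\mathbb{R}$, is even, and is strictly decreasing on $[0,+\infty)$. Consequently, the mapping $[0,+\infty) \ni x \mapsto x f(x)$ is subadditive, i.e. $(x+y)f(x+y) \le x f(x) + y f(y)$ for all $x,y \ge 0$. *)

(* Defs.v *)
From Stdlib Require Import Reals.
Open Scope R_scope.

Definition f_lnsinh (x : R) : R :=
  if Req_EM_T x 0 then 0 else ln (sinh x / x) - x ^ 2 / 6.

(* Main.v *)
Require Import Defs.
From Stdlib Require Import Reals.
Open Scope R_scope.
From Stdlib Require Import Lra Psatz.
From Coquelicot Require Import Coquelicot.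

Lemma cont_local (f h : R -> R) x d : 0 < d ->
  (forall y, Rabs (y - x) < d -> f y = h y) -> continuity_pt h x -> continuity_pt f x.
Proof.
  intros Hd Heq Hc eps He. destruct (Hc eps He) as [a [Ha H]].
  exists (Rmin a d). split. apply Rmin_pos; lra.
  intros y [Dy Hy]. simpl in *. unfold R_dist in *.
  rewrite (Heq y), (Heq x). apply H; split; auto.
  apply Rlt_le_trans with (1 := Hy); apply Rmin_l.
  rewrite Rminus_diag, Rabs_R0; lra.
  apply Rlt_le_trans with (1 := Hy); apply Rmin_r.
Qed.

Definition gq (y : R) : R := if Req_EM_T y 0 then 1 else sinh y / y.

Lemma gq_cont0 : continuity_pt gq 0.
Proof.
  intros eps He. destruct (derivable_pt_lim_sinh 0 eps He) as [d Hd].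
  exists d; split; [apply cond_pos|].
  intros y [[_ Hy0] Hyd]. simpl in *. unfold R_dist in *.
  unfold gq. destruct (Req_EM_T y 0); [lra|]. destruct (Req_EM_T 0 0); [|lra].
  rewrite Rminus_0_r in Hyd.
  specialize (Hd y n Hyd). rewrite Rplus_0_l, sinh_0, cosh_0, Rminus_0_r in Hd. exact Hd.
Qed.

Lemma sinh_neg' x : sinh (- x) = - sinh x.
Proof. unfold sinh. rewrite Ropp_involutive. field. Qed.

Lemma sinh_pos x : 0 < x -> 0 < sinh x.
Proof. intros; rewrite <- sinh_0; apply sinh_lt; auto. Qed.

Lemma sinh_div_pos x : x <> 0 -> 0 < sinh x / x.
Proof.
  intros Hx. destruct (Rlt_or_le 0 x).
  - apply Rdiv_lt_0_compat; auto. apply sinh_pos; auto.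
  - assert (x < 0) by lra. replace (sinh x / x) with (sinh (-x) / (-x)).
    apply Rdiv_lt_0_compat; try lra. apply sinh_pos; lra.
    rewrite sinh_neg'. field; auto.
Qed.

Lemma ln_cont y : 0 < y -> continuity_pt ln y.
Proof. intros Hy. apply derivable_continuous_pt. exact (exist _ _ (derivable_pt_lim_ln y Hy)). Qed.

Lemma sq6_cont y : continuity_pt (fun y => y ^ 2 / 6) y.
Proof.
  apply (continuity_pt_div (fun y => y ^ 2) (fct_cte 6)).
  apply derivable_continuous_pt. exact (exist _ _ (derivable_pt_lim_pow y 2)).
  apply continuity_pt_const. intros a b; reflexivity.
  unfold fct_cte; lra.
Qed.

Lemma f_cont x : continuity_pt f_lnsinh x.
Proof.
  destruct (Req_EM_T x 0) as [->|Hx].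
  - apply (cont_local _ (fun y => ln (gq y) - y ^ 2 / 6) 0 1); [lra| |].
    + intros y _. unfold f_lnsinh, gq. destruct (Req_EM_T y 0).
      subst. rewrite ln_1. field. reflexivity.
    + apply (continuity_pt_minus (comp ln gq) (fun y => y ^ 2 / 6)).
      apply continuity_pt_comp. apply gq_cont0. apply ln_cont.
      unfold gq. destruct (Req_EM_T 0 0); lra.
      apply sq6_cont.
  - apply (cont_local _ (fun y => ln (sinh y / y) - y ^ 2 / 6) x (Rabs x)).
    + apply Rabs_pos_lt; auto.
    + intros y Hy. unfold f_lnsinh. destruct (Req_EM_T y 0); [|reflexivity].
      subst. rewrite Rminus_0_l, Rabs_Ropp in Hy. lra.
    + apply (continuity_pt_minus (comp ln (sinh / id)%F) (fun y => y ^ 2 / 6)).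
      apply continuity_pt_comp.
      apply continuity_pt_div. apply derivable_continuous_pt, derivable_pt_sinh.
      apply derivable_continuous_pt, derivable_pt_id. exact Hx.
      apply ln_cont. apply sinh_div_pos; auto.
      apply sq6_cont.
Qed.

Lemma f_even x : f_lnsinh (- x) = f_lnsinh x.
Proof.
  unfold f_lnsinh. destruct (Req_EM_T (-x) 0); destruct (Req_EM_T x 0); try lra.
  rewrite sinh_neg'. replace (- sinh x / - x) with (sinh x / x) by (field; auto).
  f_equal. f_equal. simpl. ring.
Qed.

Lemma dpl_eq f x l1 l2 : derivable_pt_lim f x l1 -> l1 = l2 -> derivable_pt_lim f x l2.
Proof. intros H ->; exact H. Qed.

Definition Hh t := t * cosh t - sinh t.
Definition Gg t := (3 + t ^ 2) * sinh t - 3 * t * cosh t.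

Lemma Hh_pos t : 0 < t -> 0 < Hh t.
Proof.
  intros Ht.
  assert (D : forall c, derivable_pt_lim Hh c (c * sinh c)).
  { intros c. 
    pose proof (derivable_pt_lim_minus _ _ c _ _
      (derivable_pt_lim_mult id cosh c _ _ (derivable_pt_lim_id c) (derivable_pt_lim_cosh c))
      (derivable_pt_lim_sinh c)) as H.
    eapply dpl_eq; [exact H|]. unfold id. ring. }
  destruct (MVT_cor2 Hh (fun c => c * sinh c) 0 t Ht (fun c _ => D c)) as [c [Hc1 Hc2]].
  assert (Hh 0 = 0) by (unfold Hh; rewrite sinh_0, cosh_0; ring).
  assert (0 < c * sinh c) by (apply Rmult_lt_0_compat; [lra| apply sinh_pos; lra]).
  assert (0 < c * sinh c * (t - 0)) by (apply Rmult_lt_0_compat; lra).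
  lra.
Qed.

Lemma Gg_pos t : 0 < t -> 0 < Gg t.
Proof.
  intros Ht.
  assert (D : forall c, derivable_pt_lim Gg c (c * Hh c)).
  { intros c.
    pose proof (derivable_pt_lim_minus _ _ c _ _
      (derivable_pt_lim_mult (fct_cte 3 + (fun t => t ^ 2))%F sinh c _ _
         (derivable_pt_lim_plus _ _ c _ _ (derivable_pt_lim_const 3 c) (derivable_pt_lim_pow c 2))
         (derivable_pt_lim_sinh c))
      (derivable_pt_lim_mult (fct_cte 3 * id)%F cosh c _ _
         (derivable_pt_lim_mult _ _ c _ _ (derivable_pt_lim_const 3 c) (derivable_pt_lim_id c))
         (derivable_pt_lim_cosh c))) as H.
    revert H. unfold id, fct_cte, Hh, plus_fct, mult_fct. simpl.
    intro H. eapply dpl_eq; [exact H|]. ring. }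
  destruct (MVT_cor2 Gg (fun c => c * Hh c) 0 t Ht (fun c _ => D c)) as [c [Hc1 Hc2]].
  assert (Gg 0 = 0) by (unfold Gg; rewrite sinh_0, cosh_0; ring).
  assert (0 < c * Hh c) by (apply Rmult_lt_0_compat; [lra| apply Hh_pos; lra]).
  assert (0 < c * Hh c * (t - 0)) by (apply Rmult_lt_0_compat; lra).
  lra.
Qed.

Definition Ff y := ln (sinh y / y) - y ^ 2 / 6.
Definition Fd c := (c * cosh c - sinh c) / (c * sinh c) - c / 3.

Lemma Ff_deriv c : 0 < c -> derivable_pt_lim Ff c (Fd c).
Proof.
  intros Hc. assert (Hs := sinh_pos c Hc).
  pose proof (derivable_pt_lim_minus _ _ c _ _
    (derivable_pt_lim_comp (sinh / id)%F ln c _ _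
       (derivable_pt_lim_div sinh id c _ _ (derivable_pt_lim_sinh c) (derivable_pt_lim_id c) ltac:(unfold id; lra))
       (derivable_pt_lim_ln _ (Rdiv_lt_0_compat _ _ Hs Hc)))
    (derivable_pt_lim_div (fun y => y ^ 2) (fct_cte 6) c _ _
       (derivable_pt_lim_pow c 2) (derivable_pt_lim_const 6 c) ltac:(unfold fct_cte; lra))) as H.
  revert H.
  intro H. eapply dpl_eq; [exact H|].
  unfold Fd, id, fct_cte, Rsqr, div_fct, comp; simpl; field; lra.
Qed.

Lemma Fd_neg c : 0 < c -> Fd c < 0.
Proof.
  intros Hc. assert (Hs := sinh_pos c Hc). assert (HG := Gg_pos c Hc).
  assert (0 < Gg c / (3 * c * sinh c)).
  { apply Rdiv_lt_0_compat; auto. apply Rmult_lt_0_compat; lra. }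
  replace (Fd c) with (- (Gg c / (3 * c * sinh c))) by (unfold Fd, Gg; field; lra).
  lra.
Qed.

Lemma f_dec x y : 0 <= x -> x < y -> f_lnsinh y < f_lnsinh x.
Proof.
  intros Hx Hxy.
  set (df := fun c => if Rlt_dec 0 c then Fd c else -1).
  destruct (MVT_gen f_lnsinh x y df) as [c [Hc Heq]].
  - intros c Hc. rewrite Rmin_left in Hc by lra. rewrite Rmax_right in Hc by lra.
    assert (Hc0 : 0 < c) by lra.
    unfold df. destruct (Rlt_dec 0 c); [|lra].
    apply (is_derive_ext_loc Ff).
    + exists (mkposreal c Hc0). intros t Ht.
      unfold ball in Ht; simpl in Ht. unfold AbsRing_ball, abs, minus, plus, opp in Ht; simpl in Ht.
      apply Rabs_lt_between in Ht.
      unfold f_lnsinh, Ff. destruct (Req_EM_T t 0); [lra|reflexivity].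
    + apply is_derive_Reals, Ff_deriv; auto.
  - intros; apply f_cont.
  - assert (df c < 0).
    { unfold df. destruct (Rlt_dec 0 c). apply Fd_neg; auto. lra. }
    assert (df c * (y - x) < 0) by nra.
    lra.
Qed.

Theorem mainTheorem2 :
  (forall x : R, continuity_pt f_lnsinh x) /\
  (forall x : R, f_lnsinh (- x) = f_lnsinh x) /\
  (forall x y : R, 0 <= x -> x < y -> f_lnsinh y < f_lnsinh x) /\
  (forall x y : R, 0 <= x -> 0 <= y ->
     (x + y) * f_lnsinh (x + y) <= x * f_lnsinh x + y * f_lnsinh y).
Proof.
  split; [exact f_cont|]. split; [exact f_even|]. split; [exact f_dec|].
  intros x y Hx Hy.
  assert (A : f_lnsinh (x + y) <= f_lnsinh x).
  { destruct (Req_dec y 0) as [->|]. rewrite Rplus_0_r; lra. left; apply f_dec; lra. }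
  assert (B : f_lnsinh (x + y) <= f_lnsinh y).
  { destruct (Req_dec x 0) as [->|]. rewrite Rplus_0_l; lra. left; apply f_dec; lra. }
  nra.
Qed.
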